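(* Let $\Theta\subseteq\mathbb{R}^p$ be convex and let $f=\frac1T\sum_{t=1}^Tf^t$ where each $f^t:\mathbb{R}^p\to\mathbb{R}$ is continuous, $f$ is convex with a minimizer $\theta^\star$ on $\Theta$, $f^\star\triangleq\min_{\theta\in\Theta}f(\theta)$, and $\delta\triangleq1/T$. Consider the incremental scheme (MISO): given $\theta_0\in\Theta$, choose surrogates $g_0^t$ of $f^t$ near $\theta_0$ for all $t$; for $n\ge1$, pick $\hat t_n\in\{1,\dots,T\}$ uniformly at random (independently), choose a surrogate $g_n^{\hat t_n}$ of $f^{\hat t_n}$ near $\theta_{n-1}$, set $g_n^t\triangleq g_{n-1}^t$ for $t\ne\hat t_n$, and set $\theta_n\in\operatorname{arg\,min}_{\theta\in\Theta}\frac1T\sum_{t=1}^Tg_n^t(\theta)$. Assume every surrogate is a majorant function, with $g_0^t\in\mathcal{S}_{L,\rho}(f^t,\theta_0)$ and $g_n^{\hat t_n}\in\mathcal{S}_{L,\rho}(f^{\hat t_n},\theta_{n-1})$, where $\rho\ge L$. Then $$\mathbb{E}[f(\theta_n)-f^\star]\le\frac{L\|\theta^\star-\theta_0\|_2^2}{2\delta n}\quad\text{for all }n\ge1.$$ If moreover $f$ is $\mu$-strongly convex, then for all $n\ge1$, $$\mathbb{E}[\|\theta^\star-\theta_n\|_2^2]\le\Big((1-\delta)+\delta\frac{L}{\rho+\mu}\Big)^n\|\theta^\star-\theta_0\|_2^2,\qquad\mathbb{E}[f(\theta_n)-f^\star]\le\Big((1-\delta)+\delta\frac{L}{\rho+\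mu}\Big)^{n-1}\frac{L\|\theta^\star-\theta_0\|_2^2}{2}.$$
   Context: First-order surrogates: $g:\mathbb{R}^p\to\mathbb{R}$ belongs to $\mathcal{S}_L(\phi,\kappa)$ if (a) $g(\theta')\ge\phi(\theta')$ for all $\theta'\in\operatorname{arg\,min}_{\theta\in\Theta}g(\theta)$, and (b) $h\triangleq g-\phi$ is differentiable with $L$-Lipschitz gradient, $h(\kappa)=0$, $\nabla h(\kappa)=0$; $\mathcal{S}_{L,\rho}(\phi,\kappa)$ is the subset of $\rho$-strongly convex elements. A majorant function satisfies $g\ge\phi$ everywhere. The minimizers are assumed to exist. *)

(* Defs.v *)
From HB Require Import structures.
From mathcomp Require Import all_boot all_order all_algebra.
From mathcomp Require Import all_classical all_reals all_analysis.
Set Implicit Arguments. Unset Strict Implicit. Unset Printing Implicit Defensive.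
Import Order.TTheory GRing.Theory Num.Theory.
Import numFieldNormedType.Exports.
Local Open Scope ring_scope.

Section MISO_defs.
Variables (R : realType) (p : nat).
Notation V := 'rV[R]_p.

Definition norm2 (v : V) : R := Num.sqrt (\sum_(i < p) (v ord0 i) ^+ 2).

Definition grad (h : V -> R) (x : V) : V :=
  \row_(i < p) ('D_(delta_mx ord0 i : V) h x).

Definition convex_fun (f : V -> R) : Prop :=
  forall x y (l : R), 0 <= l <= 1 ->
    f (l *: x + (1 - l) *: y) <= l * f x + (1 - l) * f y.

Definition strongly_convex (mu : R) (f : V -> R) : Prop :=
  forall x y (l : R), 0 <= l <= 1 ->
    f (l *: x + (1 - l) *: y) <=
      l * f x + (1 - l) * f y - mu / 2 * l * (1 - l) * norm2 (x - y) ^+ 2.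

Definition is_argmin (Theta : set V) (g : V -> R) (th : V) : Prop :=
  Theta th /\ forall th', Theta th' -> g th <= g th'.

Definition majorant (phi g : V -> R) : Prop := forall x, phi x <= g x.

Definition first_order_surrogate (Theta : set V) (L : R) (phi : V -> R)
    (kappa : V) (g : V -> R) : Prop :=
  let h := fun x => g x - phi x in
  [/\ (forall th', is_argmin Theta g th' -> phi th' <= g th'),
      (forall x, differentiable h x),
      (forall x y, norm2 (grad h x - grad h y) <= L * norm2 (x - y)),
      h kappa = 0 &
      grad h kappa = 0].

Definition strong_surrogate (Theta : set V) (L rho : R) (phi : V -> R)
    (kappa : V) (g : V -> R) : Prop :=
  first_order_surrogate Theta L phi kappa g /\ strongly_convex rho g.

(* A run of MISO: the random indices hat t_1, ..., hat t_n form the history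
   h = [:: hat t_1; ...; hat t_n] (a seq 'I_T); the iterate theta_n = th h and
   the surrogates g_n^t = g h t are (arbitrary) deterministic functions of the
   history. *)
Definition miso_run (T : nat) (Theta : set V) (L rho : R)
    (F : 'I_T -> V -> R) (theta0 : V)
    (th : seq 'I_T -> V) (g : seq 'I_T -> 'I_T -> V -> R) : Prop :=
  [/\ th [::] = theta0,
      (forall t, majorant (F t) (g [::] t) /\
                 strong_surrogate Theta L rho (F t) theta0 (g [::] t)),
      (forall h i, majorant (F i) (g (rcons h i) i) /\
                   strong_surrogate Theta L rho (F i) (th h) (g (rcons h i) i)),
      (forall h i t, t != i -> g (rcons h i) t = g h t) &
      (forall h, h != [::] ->
         is_argmin Theta (fun x => T%:R^-1 * \sum_(t < T) g h t x) (th h))].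

(* expectation over n i.i.d. uniform indices in {1..T} *)
Definition expect_n (T n : nat) (X : seq 'I_T -> R) : R :=
  (T%:R ^+ n)^-1 * \sum_(h : n.-tuple 'I_T) X (tval h).

End MISO_defs.

(* Main.v *)
Require Import Defs.
From HB Require Import structures.
From mathcomp Require Import all_boot all_order all_algebra.
From mathcomp Require Import all_classical all_reals all_analysis.
From mathcomp Require Import ring lra.
Set Implicit Arguments. Unset Strict Implicit. Unset Printing Implicit Defensive.
Import Order.TTheory GRing.Theory Num.Theory.
Import numFieldNormedType.Exports.
Local Open Scope ring_scope.
Local Open Scope classical_set_scope.
Section S.
Variables (R : realType) (p : nat).
Local Notation V := 'rV[R]_p.

Lemma CS (u w : V) :
  \sum_(i < p) u 0 i * w 0 i <= norm2 u * norm2 w.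
Proof.
set s := \sum_(i < p) u 0 i * w 0 i.
set a := \sum_(i < p) u 0 i ^+ 2.
set b := \sum_(i < p) w 0 i ^+ 2.
have a0 : 0 <= a by apply: sumr_ge0 => i _; exact: sqr_ge0.
have b0 : 0 <= b by apply: sumr_ge0 => i _; exact: sqr_ge0.
have key t : 0 <= t ^+ 2 * a - 2 * t * s + b.
  have -> : t ^+ 2 * a - 2 * t * s + b = \sum_(i < p) (t * u 0 i - w 0 i) ^+ 2.
    transitivity (\sum_(i < p) (t ^+ 2 * u 0 i ^+ 2 + (- (2 * t)) * (u 0 i * w 0 i) + w 0 i ^+ 2)).
      by rewrite !big_split /= -!mulr_sumr /a /s /b; ring.
    by apply: eq_bigr => i _; ring.
  by apply: sumr_ge0 => i _; exact: sqr_ge0.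
have Hn : 0 <= norm2 u * norm2 w by rewrite mulr_ge0 // sqrtr_ge0.
have [s0|s0] := lerP s 0; first exact: le_trans s0 Hn.
rewrite /norm2 -/a -/b -sqrtrM //.
rewrite -(ger0_norm (ltW s0)) -sqrtr_sqr ler_sqrt; last exact: mulr_ge0.
have [a00|a00] := eqVneq a 0.
  have := key ((b + 1) / s); rewrite a00 mulr0 add0r.
  have -> : 2 * ((b + 1) / s) * s = 2 * (b + 1) by field; rewrite gt_eqF.
  lra.
have apos : 0 < a by rewrite lt_def a00 a0.
have := key (s / a).
have -> : (s / a) ^+ 2 * a - 2 * (s / a) * s + b = (a * b - s ^+ 2) / a.
  by field; rewrite gt_eqF.
rewrite pmulr_lge0 ?invr_gt0 // subr_ge0 => H.
lra.
Qed.

Lemma norm2_ge0 (v : V) : 0 <= norm2 v.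
Proof. exact: sqrtr_ge0. Qed.

Lemma norm2_sqr (v : V) : norm2 v ^+ 2 = \sum_(i < p) v 0 i ^+ 2.
Proof. by rewrite /norm2 sqr_sqrtr //; apply: sumr_ge0 => i _; exact: sqr_ge0. Qed.

Lemma norm2Z (c : R) (v : V) : norm2 (c *: v) = `|c| * norm2 v.
Proof.
rewrite /norm2 -sqrtr_sqr -sqrtrM ?sqr_ge0 // mulr_sumr.
by congr Num.sqrt; apply: eq_bigr => i _; rewrite mxE exprMn.
Qed.

End S.
Section S2.
Variables (R : realType) (p : nat).
Local Notation V := 'rV[R]_p.

Lemma DdE (h : V -> R) y v : differentiable h y ->
  'D_v h y = \sum_(i < p) v 0 i * grad h y 0 i.
Proof.
move=> dh; rewrite deriveE // {1}(row_sum_delta v) linear_sum.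
apply: eq_bigr => i _; rewrite linearZ /= mxE -deriveE //.
Qed.

Lemma phi_derive (h : V -> R) (d k : V) s : differentiable h (s *: d + k) ->
  is_derive s 1 (fun s => h (s *: d + k)) ('D_d h (s *: d + k)).
Proof.
move=> dh.
have E : (fun t : R => t^-1 *: (((fun s => h (s *: d + k)) \o shift s) (t *: 1) - h (s *: d + k)))
   = (fun t => t^-1 *: ((h \o shift (s *: d + k)) (t *: d) - h (s *: d + k))).
  apply/funext => t /=; congr (_ *: (h _ - _)).
  by rewrite -[t%:A]/(t * 1) mulr1 scalerDl addrA.
have D : derivable (fun s : R => h (s *: d + k)) s 1.
  by rewrite /derivable E; exact: diff_derivable.
split => //.
by rewrite /derive E.
Qed.

End S2.
Section S3.
Variables (R : realType) (p : nat).
Local Notation V := 'rV[R]_p.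

Lemma descent (h : V -> R) (L : R) (k x : V) :
  (forall x, differentiable h x) ->
  (forall x y, norm2 (grad h x - grad h y) <= L * norm2 (x - y)) ->
  h k = 0 -> grad h k = 0 ->
  h x <= L / 2 * norm2 (x - k) ^+ 2.
Proof.
move=> dh lip hk gk.
set d := x - k; set N := norm2 d.
set K := L / 2 * N ^+ 2.
pose psi := fun s : R => h (s *: d + k) - K * (s * s).
have dpsi (s : R) : is_derive s 1 psi ('D_d h (s *: d + k) - K * (s * 2)).
  have -> : psi = (fun s : R => h (s *: d + k)) - (fun s : R => K * (s * s)).
    by apply/funext => t.
  apply: is_deriveB; first exact: phi_derive.
  have H := is_deriveZ K (is_deriveM (@is_derive_id _ _ s (1:R)) (@is_derive_id _ _ s (1:R))).
  have -> : (fun s0 : R => K * (s0 * s0)) = K \*: (id * id) by apply/funext => t.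
  apply: is_derive_eq H _; rewrite /= /GRing.scale /=; ring.
have cont : {within `[0, 1], continuous psi}.
  apply: continuous_subspaceT => t.
  apply: differentiable_continuous; apply/derivable1_diffP.
  exact: (dpsi t).(ex_derive).
have [c c01 E] := MVT ltr01 (fun c _ => dpsi c) cont.
have c0 : 0 < c by move: c01; rewrite in_itv /= => /andP[].
have psi0 : psi 0 = 0 by rewrite /psi scale0r add0r hk; ring.
have psi1 : psi 1 = h x - K by rewrite /psi scale1r /d subrK; ring.
move: E; rewrite psi0 psi1 !subr0 mulr1 DdE //.
have : \sum_(i < p) d 0 i * grad h (c *: d + k) 0 i <= L * c * N ^+ 2.
  have -> : grad h (c *: d + k) = grad h (c *: d + k) - grad h k by rewrite gk subr0.
  apply: le_trans (CS _ _) _.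
  have := lip (c *: d + k) k; rewrite addrK norm2Z gtr0_norm // => H.
  have := ler_wpM2l (norm2_ge0 d) H; rewrite -/N => H2.
  by have -> : L * c * N ^+ 2 = N * (L * (c * N)) by ring.
rewrite /K; lra.
Qed.
End S3.
Section S4.
Variables (R : realType) (p : nat).
Local Notation V := 'rV[R]_p.

Lemma convex_mem (Theta : set V) x y (l : R) :
  convex.convex_set Theta -> Theta x -> Theta y -> 0 <= l -> l <= 1 ->
  Theta (l *: x + (1 - l) *: y).
Proof.
move=> cT Tx Ty l0 l1.
have := cT x y (Itv01 l0 l1) (mem_set Tx) (mem_set Ty).
by rewrite inE.
Qed.

Lemma sc_opt (Theta : set V) (G : V -> R) mu x y :
  convex.convex_set Theta -> strongly_convex mu G -> is_argmin Theta G x ->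
  Theta y -> G x + mu / 2 * norm2 (y - x) ^+ 2 <= G y.
Proof.
move=> cT sG [Tx mx] Ty.
set D := norm2 (y - x) ^+ 2.
have key l : 0 < l -> l <= 1 -> G x <= G y - mu / 2 * (1 - l) * D.
  move=> l0 l1.
  have Tz := convex_mem cT Ty Tx (ltW l0) l1.
  have H1 := mx _ Tz.
  have H2 := sG y x l; rewrite (ltW l0) l1 /= in H2.
  have H3 := le_trans H1 (H2 isT).
  rewrite -/D in H3.
  have : l * G x <= l * (G y - mu / 2 * (1 - l) * D) by lra.
  by rewrite ler_pM2l.
rewrite leNgt; apply/negP => H.
set e := G x + mu / 2 * D - G y.
have e0 : 0 < e by rewrite /e subr_gt0.
set M := `|mu / 2 * D|.
have M0 : 0 <= M := normr_ge0 _.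
have eM : 0 < e + M by lra.
set l := e / (e + M).
have l0 : 0 < l by rewrite divr_gt0.
have l1 : l <= 1.
  rewrite ler_pdivrMr // mul1r; lra.
have K := key l l0 l1.
have K2 : l * (mu / 2 * D) <= l * M.
  apply: ler_wpM2l; [exact: ltW | exact: ler_norm].
have K3 : l * M < e.
  rewrite /l mulrAC ltr_pdivrMr // ltr_pM2l //; lra.
have : G x <= G y - mu / 2 * D + l * (mu / 2 * D).
  by have -> : G y - mu / 2 * D + l * (mu / 2 * D) = G y - mu / 2 * (1 - l) * D by ring.
rewrite /e in e0 K3; lra.
Qed.
End S4.
Section Expect.
Variables (R : realType) (T : nat).

Lemma sum_tuple_rcons n (X : seq 'I_T -> R) :
  \sum_(u : n.+1.-tuple 'I_T) X u = \sum_(h : n.-tuple 'I_T) \sum_(i < T) X (rcons h i).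
Proof.
rewrite pair_big /=.
pose phi := fun q : n.-tuple 'I_T * 'I_T => rcons_tuple q.1 q.2.
have inj : injective phi.
  move=> [a b] [c d] /(congr1 val) /= /rcons_inj [/val_inj -> ->] //.
have bij : bijective phi.
  apply: (inj_card_bij inj); rewrite card_prod !card_tuple card_ord expnS mulnC //.
rewrite (reindex phi) //=; last exact: onW_bij.
Qed.

Lemma expect_rcons n (X : seq 'I_T -> R) : (0 < T)%N ->
  expect_n n.+1 X = expect_n n (fun h => T%:R^-1 * \sum_(i < T) X (rcons h i)).
Proof.
move=> T0; rewrite /expect_n sum_tuple_rcons -mulr_sumr mulrA exprS invfM mulrC.
by rewrite mulrC (mulrC (T%:R^-1)).

Qed.

Lemma expect_le n (X Y : seq 'I_T -> R) :
  (forall h : n.-tuple 'I_T, X h <= Y h) -> expect_n n X <= expect_n n Y.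
Proof.
move=> H; rewrite /expect_n ler_wpM2l ?invr_ge0 ?exprn_ge0 ?ler0n //.
by apply: ler_sum => h _; exact: H.
Qed.

Lemma expect_lin n (a b : R) (X Y : seq 'I_T -> R) :
  expect_n n (fun h => a * X h + b * Y h) = a * expect_n n X + b * expect_n n Y.
Proof.
rewrite /expect_n big_split /= -!mulr_sumr; ring.
Qed.

Lemma expect_cst n (c : R) : (0 < T)%N -> expect_n n (fun _ : seq 'I_T => c) = c.
Proof.
move=> T0; rewrite /expect_n sumr_const card_tuple card_ord -[c *+ _]mulr_natr natrX.
have H : T%:R ^+ n != 0 :> R by rewrite expf_neq0 // pnatr_eq0 -lt0n.
by rewrite mulrC mulfK.
Qed.

End Expect.
Section MISO.
Variables (R : realType) (p T : nat) (Theta : set 'rV[R]_p)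
  (F : 'I_T -> 'rV[R]_p -> R) (L rho : R) (theta0 thstar : 'rV[R]_p)
  (th : seq 'I_T -> 'rV[R]_p) (g : seq 'I_T -> 'I_T -> 'rV[R]_p -> R).
Local Notation V := 'rV[R]_p.
Hypothesis T0 : (0 < T)%N.
Hypothesis cT : convex.convex_set Theta.
Hypothesis run : miso_run Theta L rho F theta0 th g.
Hypothesis Ttheta0 : Theta theta0.

Fixpoint kapr (r : seq 'I_T) (t : 'I_T) : V :=
  if r is i :: r' then (if t == i then th (rev r') else kapr r' t) else theta0.
Definition kap h t := kapr (rev h) t.

Lemma kap_nil t : kap [::] t = theta0. Proof. by []. Qed.
Lemma kap_rcons h i t : kap (rcons h i) t = if t == i then th h else kap h t.
Proof. by rewrite /kap rev_rcons /= revK. Qed.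

Lemma g_props h t : majorant (F t) (g h t) /\
  strong_surrogate Theta L rho (F t) (kap h t) (g h t).
Proof.
case: run => _ H0 H1 H2 _.
elim/last_ind: h t => [|h i IH] t; first exact: H0.
rewrite kap_rcons; case: eqP => [->|/eqP ne]; first exact: H1.
by rewrite H2.
Qed.

Lemma g_upper h t x : g h t x <= F t x + L / 2 * norm2 (x - kap h t) ^+ 2.
Proof.
have [_ [[_ dh lip hk gk] _]] := g_props h t.
have := descent x dh lip hk gk.
by rewrite lerBlDl addrC.
Qed.

Lemma g_anchor h i : g (rcons h i) i (th h) = F i (th h).
Proof.
have [_ [[_ _ _ hk _] _]] := g_props (rcons h i) i.
move: hk; rewrite kap_rcons eqxx => /eqP; rewrite subr_eq0 => /eqP //.
Qed.

Definition fb x := T%:R^-1 * \sum_(t < T) F t x.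
Definition Gb h x := T%:R^-1 * \sum_(t < T) g h t x.
Definition A h := T%:R^-1 * \sum_(t < T) norm2 (thstar - kap h t) ^+ 2.
Definition Dn h := norm2 (thstar - th h) ^+ 2.
Definition D0 := norm2 (thstar - theta0) ^+ 2.

Lemma Tpos : 0 < T%:R :> R. Proof. by rewrite ltr0n. Qed.
Lemma Tinv_ge0 : 0 <= T%:R^-1 :> R. Proof. by rewrite invr_ge0 ler0n. Qed.

Lemma Gb_ge h x : fb x <= Gb h x.
Proof.
rewrite /fb /Gb ler_wpM2l ?Tinv_ge0 //; apply: ler_sum => t _.
by have [maj _] := g_props h t; exact: maj.
Qed.

Lemma Gb_sc h : strongly_convex rho (Gb h).
Proof.
move=> x y l hl; rewrite /Gb.
have H t : g h t (l *: x + (1 - l) *: y) <=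
    l * g h t x + (1 - l) * g h t y - rho / 2 * l * (1 - l) * norm2 (x - y) ^+ 2.
  by have [_ [_ sc]] := g_props h t; exact: sc.
set c := rho / 2 * l * (1 - l) * norm2 (x - y) ^+ 2.
have K : T%:R^-1 * \sum_(t < T) g h t (l *: x + (1 - l) *: y) <=
    T%:R^-1 * \sum_(t < T) (l * g h t x + (1 - l) * g h t y - c).
  by apply: ler_wpM2l; [exact: Tinv_ge0 | apply: ler_sum => t _; exact: H].
apply: (le_trans K); rewrite le_eqVlt; apply/orP; left; apply/eqP.
rewrite !big_split /= sumrN sumr_const card_ord -!mulr_sumr.
have Tn : T%:R != 0 :> R by rewrite gt_eqF // Tpos.
by rewrite -mulr_natr; field.
Qed.

Hypothesis opt : is_argmin Theta fb thstar.

Lemma th_argmin h : h != [::] -> is_argmin Theta (Gb h) (th h).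
Proof. by case: run => _ _ _ _ H5; exact: H5. Qed.

Lemma th_Theta h : Theta (th h).
Proof.
have [->|hn] := eqVneq h [::]; first by case: run => -> _.
by case: (th_argmin hn).
Qed.

Lemma Gb_star h : Gb h thstar <= fb thstar + L / 2 * A h.
Proof.
rewrite /Gb /fb /A mulrA (mulrC (L / 2)) -mulrA -mulrDr.
apply: ler_wpM2l; first exact: Tinv_ge0.
rewrite mulr_sumr -big_split /=; apply: ler_sum => t _; exact: g_upper.
Qed.

Lemma key h : h != [::] -> Gb h (th h) - fb thstar <= L / 2 * A h - rho / 2 * Dn h.
Proof.
move=> hn.
have := sc_opt cT (Gb_sc h) (th_argmin hn) (proj1 opt).
have := Gb_star h.
rewrite /Dn; lra.
Qed.

Lemma avgA h : T%:R^-1 * \sum_(i < T) A (rcons h i) = (1 - T%:R^-1) * A h + T%:R^-1 * Dn h.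
Proof.
set a := fun t => norm2 (thstar - kap h t) ^+ 2.
have E i : A (rcons h i) = T%:R^-1 * (\sum_(t < T) a t - a i + Dn h).
  rewrite /A; congr (_ * _).
  rewrite (bigD1 i) //= kap_rcons eqxx [in RHS](bigD1 i) //=.
  have -> : \sum_(t < T | t != i) norm2 (thstar - kap (rcons h i) t) ^+ 2
      = \sum_(t < T | t != i) a t.
    by apply: eq_bigr => t /negbTE ne; rewrite kap_rcons ne.
  rewrite /Dn /a; set S := \sum_(t < T | t != i) _.
  set Y := norm2 (thstar - kap h i) ^+ 2; set D := norm2 (thstar - th h) ^+ 2.
  by rewrite (addrC Y) addrK addrC.
under eq_bigr do rewrite E.
rewrite -mulr_sumr !big_split /= sumrN !sumr_const card_ord.
rewrite /A /a.
have Tn : T%:R != 0 :> R by rewrite gt_eqF // Tpos.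
move: (\sum_(t < T) norm2 (thstar - kap h t) ^+ 2) (Dn h) => s d.
clear E.
by rewrite -[s *+ T]mulr_natr -[d *+ T]mulr_natr; field.
Qed.

Lemma mono h i : h != [::] -> Gb (rcons h i) (th (rcons h i)) <= Gb h (th h).
Proof.
move=> hn.
have rn : rcons h i != [::] by rewrite -size_eq0 size_rcons.
have [_ m] := th_argmin rn.
apply: (le_trans (m _ (th_Theta h))).
rewrite /Gb; apply: ler_wpM2l; first exact: Tinv_ge0.
apply: ler_sum => t _.
have [->|ne] := eqVneq t i.
  by rewrite g_anchor; have [maj _] := g_props h i; exact: maj.
by case: run => _ _ _ H4 _; rewrite H4.
Qed.

Lemma A1 i : A [:: i] = D0.
Proof.
rewrite /A (eq_bigr (fun _ => D0)); last first.
  move=> t _; rewrite (_ : [:: i] = rcons [::] i) // kap_rcons.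
  by case: eqP => _ //; case: run => ->.
rewrite sumr_const card_ord -mulr_natr.
have Tn : T%:R != 0 :> R by rewrite gt_eqF // Tpos.
by field.
Qed.


Definition Phi h := Gb h (th h) - fb thstar.

Lemma norm2N (v : V) : norm2 (- v) = norm2 v.
Proof. by rewrite -scaleN1r norm2Z normrN normr1 mul1r. Qed.

Lemma Lge0 : (0 < p)%N -> 0 <= L.
Proof.
move=> p0.
have [_ [[_ _ lip _ _] _]] := g_props [::] (Ordinal T0).
set j := Ordinal p0.
have := lip (delta_mx 0 j) 0.
have -> : norm2 (delta_mx 0 j - 0 : V) = 1.
  rewrite subr0 /norm2 (bigD1 j) //= big1 ?addr0 ?mxE ?eqxx ?expr1n ?sqrtr1 //.
  by move=> i /negbTE ne; rewrite mxE ne mulr0n expr0n.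
by rewrite mulr1; apply: le_trans; exact: norm2_ge0.
Qed.

Lemma Dn_ge0 h : 0 <= Dn h. Proof. exact: sqr_ge0. Qed.
Lemma A_ge0 h : 0 <= A h.
Proof. by rewrite /A mulr_ge0 ?Tinv_ge0 // sumr_ge0 // => t _; exact: sqr_ge0. Qed.

Lemma tuple_nil n (h : n.+1.-tuple 'I_T) : (tval h) != [::].
Proof. by rewrite -size_eq0 size_tuple. Qed.

Lemma step1 n (h : n.+1.-tuple 'I_T) : L <= rho ->
  Phi h <= (L * T%:R / 2) * (A h - T%:R^-1 * \sum_(i < T) A (rcons h i)).
Proof.
move=> Lr.
have K := key (tuple_nil h).
rewrite avgA.
have Tn : T%:R != 0 :> R by rewrite gt_eqF // Tpos.
have -> : L * T%:R / 2 * (A h - ((1 - T%:R^-1) * A h + T%:R^-1 * Dn h))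
   = L / 2 * A h - L / 2 * Dn h by field.
have := Dn_ge0 h => D0.
have : (rho - L) * Dn h >= 0 by rewrite mulr_ge0 // subr_ge0.
rewrite /Phi; lra.
Qed.

Definition En n := expect_n n Phi.
Definition an n := expect_n n A.

Lemma En_le n : L <= rho -> En n.+1 <= (L * T%:R / 2) * (an n.+1 - an n.+2).
Proof.
move=> Lr.
rewrite /En /an [expect_n n.+2 _]expect_rcons //.
have -> : L * T%:R / 2 * (expect_n n.+1 A -
   expect_n n.+1 (fun h => T%:R^-1 * \sum_(i < T) A (rcons h i)))
  = expect_n n.+1 (fun h => (L * T%:R / 2) * A h + (- (L * T%:R / 2)) * (T%:R^-1 * \sum_(i < T) A (rcons h i))).
  by rewrite expect_lin; ring.
apply: expect_le => h; have := step1 h Lr; lra.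
Qed.

Lemma En_mono n : En n.+2 <= En n.+1.
Proof.
rewrite /En expect_rcons //; apply: expect_le => h.
have Tn : T%:R != 0 :> R by rewrite gt_eqF // Tpos.
have : \sum_(i < T) Phi (rcons h i) <= \sum_(i < T) Phi h.
  apply: ler_sum => i _; rewrite /Phi lerD2r; exact: mono (tuple_nil h).
rewrite sumr_const card_ord => H.
apply: le_trans (ler_wpM2l Tinv_ge0 H) _.
by rewrite -[Phi h *+ T]mulr_natr mulrC -mulrA mulfV // mulr1.
Qed.

Lemma an1 : an 1 = D0.
Proof.
rewrite /an -(expect_cst 1 D0 T0); congr (_ * _); apply: eq_bigr => h _.
by case: h => [[|i [|]]] //= _; rewrite A1.
Qed.

Lemma part1_aux m : L <= rho -> 0 <= L ->
  m.+1%:R * En m.+1 <= (L * T%:R / 2) * (an 1 - an m.+2).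
Proof.
move=> Lr L0; elim: m => [|m IH]; first by rewrite mul1r; exact: En_le.
have H1 := En_mono m.
have H2 := En_le m.+1 Lr.
have LT : 0 <= L * T%:R / 2 by rewrite mulr_ge0 // ?mulr_ge0 // ler0n.
have -> : m.+2%:R * En m.+2 = m.+1%:R * En m.+2 + En m.+2 by rewrite -(addn1 m.+1) natrD; ring.
have : m.+1%:R * En m.+2 <= m.+1%:R * En m.+1 by rewrite ler_wpM2l ?ler0n.
have E : L * T%:R / 2 * (an 1 - an m.+3) =
   L * T%:R / 2 * (an 1 - an m.+2) + L * T%:R / 2 * (an m.+2 - an m.+3) by ring.
rewrite E; lra.
Qed.


Lemma expect_eq n (X Y : seq 'I_T -> R) :
  (forall h : n.-tuple 'I_T, X h = Y h) -> expect_n n X = expect_n n Y.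
Proof. by move=> H; rewrite /expect_n; congr (_ * _); apply: eq_bigr => h _. Qed.

Lemma expect_scale n (a : R) (X : seq 'I_T -> R) :
  expect_n n (fun h => a * X h) = a * expect_n n X.
Proof. by rewrite /expect_n -mulr_sumr; ring. Qed.

Lemma expect_ge0 n (X : seq 'I_T -> R) :
  (forall h : n.-tuple 'I_T, 0 <= X h) -> 0 <= expect_n n X.
Proof.
move=> H; rewrite -(expect_cst n 0 T0); apply: expect_le => h; exact: H.
Qed.

Lemma final1 : (0 < p)%N -> L <= rho -> forall n, (1 <= n)%N ->
  expect_n n (fun h => fb (th h) - fb thstar) <= L * D0 / (2 * T%:R^-1 * n%:R).
Proof.
move=> p0 Lr [//|m] _.
have L0 := Lge0 p0.
have H := part1_aux m Lr L0.
have E1 : expect_n m.+1 (fun h => fb (th h) - fb thstar) <= En m.+1.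
  apply: expect_le => h; rewrite /Phi lerD2r; exact: Gb_ge.
have a0 : 0 <= an m.+2 by apply: expect_ge0 => h; exact: A_ge0.
rewrite an1 in H.
have LT : 0 <= L * T%:R / 2 by rewrite mulr_ge0 // ?mulr_ge0 // ler0n.
have H2 : m.+1%:R * En m.+1 <= L * T%:R / 2 * D0.
  apply: (le_trans H); rewrite ler_wpM2l //; lra.
have Tn : T%:R != 0 :> R by rewrite gt_eqF // Tpos.
have mpos : 0 < m.+1%:R :> R by rewrite ltr0n.
have -> : L * D0 / (2 * T%:R^-1 * m.+1%:R) = (L * T%:R / 2 * D0) / m.+1%:R.
  by field; rewrite gt_eqF.
rewrite ler_pdivlMr //; apply: le_trans H2; rewrite mulrC.
by apply: ler_wpM2l; [exact: ltW|exact: E1].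
Qed.


Lemma D_le_qA mu h : 0 < mu -> strongly_convex mu fb -> L <= rho -> (0 < p)%N ->
  h != [::] -> Dn h <= L / (rho + mu) * A h.
Proof.
move=> mu0 sf Lr p0 hn.
have L0 := Lge0 p0.
have rm : 0 < rho + mu by lra.
have H1 := sc_opt cT sf opt (th_Theta h).
rewrite -opprB norm2N -/(Dn h) in H1.
have H2 := Gb_ge h (th h).
have H3 := key hn.
rewrite mulrAC ler_pdivlMr //.
have D0 := Dn_ge0 h.
nra.
Qed.

Definition cc mu := (1 - T%:R^-1) + T%:R^-1 * (L / (rho + mu)).

Lemma an_step mu n : 0 < mu -> strongly_convex mu fb -> L <= rho -> (0 < p)%N ->
  an n.+2 <= cc mu * an n.+1.
Proof.
move=> mu0 sf Lr p0.
rewrite /an expect_rcons // /cc -expect_scale.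
apply: expect_le => h; rewrite avgA.
have := D_le_qA mu0 sf Lr p0 (tuple_nil h).
have T1 : 0 <= T%:R^-1 :> R := Tinv_ge0.
move=> H; have := ler_wpM2l T1 H.
lra.
Qed.

Lemma cc_ge0 mu : 0 < mu -> L <= rho -> (0 < p)%N -> 0 <= L / (rho + mu) <= 1 /\ 0 <= cc mu.
Proof.
move=> mu0 Lr p0; have L0 := Lge0 p0.
have rm : 0 < rho + mu by lra.
have q0 : 0 <= L / (rho + mu) by rewrite divr_ge0 // ltW.
have q1 : L / (rho + mu) <= 1 by rewrite ler_pdivrMr // mul1r; lra.
have T1 : T%:R^-1 <= 1 :> R by rewrite invf_le1 ?Tpos // ler1n.
have T0' := Tinv_ge0.
rewrite q0 q1; split => //; rewrite /cc.
have : 0 <= T%:R^-1 * (L / (rho + mu)) by rewrite mulr_ge0.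
lra.
Qed.

Lemma an_bound mu n : 0 < mu -> strongly_convex mu fb -> L <= rho -> (0 < p)%N ->
  an n.+1 <= cc mu ^+ n * D0.
Proof.
move=> mu0 sf Lr p0; have [_ c0] := cc_ge0 mu0 Lr p0.
elim: n => [|n IH]; first by rewrite an1 expr0 mul1r.
apply: le_trans (an_step n mu0 sf Lr p0) _.
by rewrite exprS -mulrA ler_wpM2l.
Qed.

Lemma final2 mu : (0 < p)%N -> L <= rho -> 0 < mu -> strongly_convex mu fb ->
  forall n, (1 <= n)%N ->
  expect_n n Dn <= cc mu ^+ n * D0 /\
  expect_n n (fun h => fb (th h) - fb thstar) <= cc mu ^+ n.-1 * (L * D0 / 2).
Proof.
move=> p0 Lr mu0 sf [//|m] _ /=.
have L0 := Lge0 p0.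
have [/andP [q0 q1] c0] := cc_ge0 mu0 Lr p0.
have B := an_bound m mu0 sf Lr p0.
have D00 : 0 <= D0 by exact: sqr_ge0.
have cm0 : 0 <= cc mu ^+ m by exact: exprn_ge0.
split.
  have E1 : expect_n m.+1 Dn <= L / (rho + mu) * an m.+1.
    rewrite /an -expect_scale; apply: expect_le => h.
    exact: D_le_qA mu0 sf Lr p0 (tuple_nil h).
  apply: le_trans E1 _.
  have := ler_wpM2l q0 B.
  have Hc : L / (rho + mu) <= cc mu.
    have T1 : T%:R^-1 <= 1 :> R by rewrite invf_le1 ?Tpos // ler1n.
    have a1 : 0 <= 1 - T%:R^-1 :> R by rewrite subr_ge0.
    have a2 : 0 <= 1 - L / (rho + mu) by rewrite subr_ge0.
    rewrite -subr_ge0 (_ : _ - _ = (1 - T%:R^-1) * (1 - L / (rho + mu))).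
      exact: mulr_ge0.
    by rewrite /cc; ring.
  have := ler_wpM2r (mulr_ge0 cm0 D00) Hc.
  rewrite exprS; nra.
have E1 : expect_n m.+1 (fun h => fb (th h) - fb thstar) <= expect_n m.+1 (fun h => L / 2 * A h).
  apply: expect_le => h.
  have := key (tuple_nil h); have := Gb_ge h (th h).
  have := Dn_ge0 h; have rho0 : 0 <= rho by lra.
  move=> D1 G K; have := mulr_ge0 rho0 D1; lra.
apply: le_trans E1 _; rewrite expect_scale.
have := ler_wpM2l (_ : 0 <= L / 2) B.
have L2 : 0 <= L / 2 by lra.
move=> /(_ L2) H; apply: le_trans H _.
by rewrite le_eqVlt; apply/orP; left; apply/eqP; ring.
Qed.

End MISO.

Lemma rV0_eq (R : realType) (p : nat) (p0 : p = 0%N) (u v : 'rV[R]_p) : u = v.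
Proof. by apply/rowP => i; have := ltn_ord i; rewrite {2}p0. Qed.

Lemma norm2_0 (R : realType) (p : nat) (p0 : p = 0%N) (v : 'rV[R]_p) : norm2 v = 0.
Proof.
rewrite /norm2 big1 ?sqrtr0 // => i _.
by have := ltn_ord i; rewrite {2}p0.
Qed.

Theorem proposition6p2 (R : realType) (p T : nat) (Theta : set 'rV[R]_p)
  (F : 'I_T -> 'rV[R]_p -> R) (L rho : R) (theta0 thstar : 'rV[R]_p)
  (th : seq 'I_T -> 'rV[R]_p) (g : seq 'I_T -> 'I_T -> 'rV[R]_p -> R) :
  (0 < T)%N ->
  convex.convex_set Theta ->
  (forall t, continuous (F t)) ->
  let f := fun x => T%:R^-1 * \sum_(t < T) F t x in
  convex_fun f ->
  is_argmin Theta f thstar ->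
  let fstar := f thstar in
  let delta := T%:R^-1 : R in
  Theta theta0 ->
  L <= rho ->
  miso_run Theta L rho F theta0 th g ->
  (forall n : nat, (1 <= n)%N ->
     expect_n n (fun h => f (th h) - fstar)
       <= L * norm2 (thstar - theta0) ^+ 2 / (2 * delta * n%:R))
  /\
  (forall mu : R, 0 < mu -> strongly_convex mu f ->
     forall n : nat, (1 <= n)%N ->
       expect_n n (fun h => norm2 (thstar - th h) ^+ 2)
         <= ((1 - delta) + delta * (L / (rho + mu))) ^+ n
              * norm2 (thstar - theta0) ^+ 2
       /\
       expect_n n (fun h => f (th h) - fstar)
         <= ((1 - delta) + delta * (L / (rho + mu))) ^+ n.-1
              * (L * norm2 (thstar - theta0) ^+ 2 / 2)).
Proof.
move=> T0 cT Fc f fconv opt fstar delta Tth0 Lr run.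
have [p0|p0] := posnP p.
  have Z : forall n, expect_n n (fun h => f (th h) - fstar) <= 0.
    move=> n; rewrite -(expect_cst n 0 T0); apply: expect_le => h.
    by rewrite /fstar (rV0_eq p0 (th h) thstar) subrr.
  have Z2 : forall n, expect_n n (fun h => norm2 (thstar - th h) ^+ 2) <= 0.
    move=> n; rewrite -(expect_cst n 0 T0); apply: expect_le => h.
    by rewrite norm2_0 // expr0n.
  have -> : norm2 (thstar - theta0) ^+ 2 = 0 by rewrite norm2_0 // expr2 mulr0.
  split => [n _|mu _ _ n _]; first by rewrite mulr0 mul0r.
  split; first by rewrite mulr0; exact: Z2.
  by apply: le_trans (Z n) _; rewrite le_eqVlt; apply/orP; left; apply/eqP; ring.
split.
  move=> n n1; exact: (final1 T0 cT run Tth0 opt p0 Lr n1).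
move=> mu mu0 sf n n1; exact: (final2 T0 cT run Tth0 opt p0 Lr mu0 sf n1).
Qed.
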